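(* Let $\Gamma\subset\mathbb{Z}^2$ be a finite convex domain and let $B_1,\dots,B_{|\partial\Gamma|}$ be a basis of the module $\mathcal{H}_\mathbb{Z}^\Gamma$ of integer-valued harmonic functions on $\Gamma$. Let $\Delta\mathcal{B}^\Gamma_\mathbb{Z}\in\mathbb{Z}^{|\partial\Gamma|\times|\partial\Gamma|}$ be the matrix whose $i$-th column is $(\Delta_\Gamma B_i)|_{\partial\Gamma}$. Then the order of the sandpile group satisfies $|G_\Gamma|=|\det(\Delta\mathcal{B}^\Gamma_\mathbb{Z})|$.
   Context: A set $\Gamma\subseteq\mathbb{Z}^2$ is a convex domain if $\Gamma=P\cap\mathbb{Z}^2$ for some convex open $P\subseteq\mathbb{R}^2$. The reduced Laplacian of finite $\Gamma$ (complement of $\Gamma$ in $\mathbb{Z}^2$ contracted to a sink) is $(\Delta_\Gamma f)(v)=\sum_{w\in\Gamma,\,w\sim v}f(w)-4f(v)$, adjacency being nearest-neighbor adjacency in $\mathbb{Z}^2$; the sandpile group is $G_\Gamma=\mathbb{Z}^\Gamma/\Delta_\Gamma(\mathbb{Z}^\Gamma)$. The boundary $\partial\Gamma$ is the set of vertices of $\Gamma$ with a neighbor outside $\Gamma$. A function $H:\Gamma\to\mathbb{Z}$ is harmonic if $(\Delta_\Gamma H)(v)=0$ for all $v\in\Gamma\setminus\partial\Gamma$; these form the free abelian group $\mathcal{H}_\mathbb{Z}^\Gamma$ of rank $|\partial\Gamma|$. The order of the basis elements in the matrix and of the rows indexed by $\partial\Gamma$ is arbitrary. *)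

(* Defs.v *)
From HB Require Import structures.
From mathcomp Require Import all_boot all_order all_algebra.
From mathcomp Require Import finmap.
From mathcomp Require Import Rstruct.
From Stdlib Require Import Reals.
Set Implicit Arguments. Unset Strict Implicit. Unset Printing Implicit Defensive.
Import Order.TTheory GRing.Theory Num.Theory.
Local Open Scope ring_scope.

Definition neighbors (p : int * int) : seq (int * int) :=
  [:: ((fst p) + 1, (snd p)); ((fst p) - 1, (snd p)); ((fst p), (snd p) + 1); ((fst p), (snd p) - 1)].

Definition adjZ2 (p q : int * int) : bool := q \in neighbors p.

Definition open_R2 (P : R * R -> Prop) : Prop :=
  forall p, P p -> exists e : R, 0 < e /\
    forall q : R * R, ((fst q) - (fst p)) ^+ 2 + ((snd q) - (snd p)) ^+ 2 < e ^+ 2 -> P q.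

Definition convex_R2 (P : R * R -> Prop) : Prop :=
  forall p q (t : R), P p -> P q -> 0 <= t -> t <= 1 ->
    P ((1 - t) * (fst p) + t * (fst q), (1 - t) * (snd p) + t * (snd q)).

Definition convex_domain (G : {fset (int * int)}) : Prop :=
  exists P : R * R -> Prop, open_R2 P /\ convex_R2 P /\
    forall p : int * int, p \in G <-> P (((fst p))%:~R, ((snd p))%:~R).

Definition on_boundary (G : {fset (int * int)}) (p : int * int) : bool :=
  (p \in G) && has (fun q => q \notin G) (neighbors p).

(* Reduced Laplacian (sink = complement of Gamma). *)
Definition lap (G : {fset (int * int)}) (f : {ffun G -> int}) (v : G) : int :=
  \sum_(w : G | adjZ2 (val v) (val w)) f w - 4 * f v.

Definition harmonic (G : {fset (int * int)}) (H : {ffun G -> int}) : Prop :=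
  forall v : G, ~~ on_boundary G (val v) -> lap H v = 0.

Definition harmonic_basis (G : {fset (int * int)}) (k : nat)
    (B : 'I_k -> {ffun G -> int}) : Prop :=
  [/\ forall i, harmonic (B i),
      (forall c : 'I_k -> int,
         (forall v : G, \sum_i c i * B i v = 0) -> forall i, c i = 0) &
      (forall H, harmonic H ->
         exists c : 'I_k -> int, forall v : G, H v = \sum_i c i * B i v)].

(* f ≡ g in the sandpile group Z^Gamma / Delta_Gamma(Z^Gamma). *)
Definition sandpile_congr (G : {fset (int * int)}) (f g : {ffun G -> int}) : Prop :=
  exists h : {ffun G -> int}, forall v : G, f v - g v = lap h v.

Definition sandpile_order (G : {fset (int * int)}) (N : nat) : Prop :=
  exists reps : 'I_N -> {ffun G -> int},
    (forall i j, sandpile_congr (reps i) (reps j) -> i = j) /\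
    (forall f, exists i, sandpile_congr f (reps i)).

(* Main.v *)
Require Import Defs.
From HB Require Import structures.
From mathcomp Require Import all_boot all_order all_algebra.
From mathcomp Require Import finmap.
From mathcomp Require Import zify.
Set Implicit Arguments. Unset Strict Implicit. Unset Printing Implicit Defensive.
Import Order.TTheory GRing.Theory Num.Theory.
Local Open Scope ring_scope.
From mathcomp Require Import zify.
Definition coker_order k (M : 'M[int]_k) (N : nat) :=
  exists r : 'I_N -> 'cV[int]_k,
    (forall i j (a : 'cV[int]_k), r i - r j = M *m a -> i = j) /\
    (forall c : 'cV[int]_k, exists i (a : 'cV[int]_k), c - r i = M *m a).

Lemma unit_int_abs (x : int) : x \is a GRing.unit -> `|x|%N = 1%N.
Proof.
case/unitrP=> y [h _]; have := congr1 absz h; rewrite abszM /=.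
by move/eqP; rewrite muln_eq1 => /andP[_ /eqP].
Qed.

Lemma small_mult (x d a : int) : `|x| < `|d| -> x = d * a -> a = 0.
Proof.
move=> hx ex; apply/eqP; apply: contraTT hx => ha.
rewrite -leNgt ex normrM -{1}(mulr1 `|d|) ler_wpM2l //.
by rewrite -gtz0_ge1 normr_gt0.
Qed.

Definition dmx k (d : seq int) : 'M[int]_k := \matrix_(i, j) (d`_i *+ (i == j :> nat)).
Arguments dmx : clear implicits.

Lemma dmx_mul k (d : seq int) (a : 'cV[int]_k) i : (dmx k d *m a) i 0 = d`_i * a i 0.
Proof.
rewrite mxE (bigD1 i) //= big1 ?addr0; first by rewrite mxE eqxx mulr1n.
by move=> j hj; rewrite mxE; move: hj; rewrite -val_eqE eq_sym => /negbTE ->; rewrite mulr0n mul0r.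
Qed.

Lemma coker_diag k (d : seq int) : (forall i : 'I_k, d`_i != 0) ->
  coker_order (dmx k d) (\prod_(i < k) absz (d`_i)%R).
Proof.
move=> hd.
pose T := {dffun forall i : 'I_k, 'I_(absz (d`_i)%R)}.
have cT : #|T| = (\prod_(i < k) absz (d`_i)%R)%N.
  rewrite card_dep_ffun foldrE big_map /= big_enum /=.
  by apply: eq_bigr => i _; rewrite card_ord.
pose e (n : 'I_(\prod_(i < k) absz (d`_i)%R)%N) : T := enum_val (cast_ord (esym cT) n).
exists (fun n => \col_i ((e n i : nat)%:Z)); split.
  move=> n n' a h.
  have eq_e : e n = e n'.
    apply/ffunP => i; apply/val_inj => /=.
    have := congr1 (fun M : 'cV_k => M i 0) h.
    rewrite dmx_mul !mxE => h2.
    have a0 : a i 0 = 0.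
      apply: (small_mult _ h2).
      have l1 := ltn_ord (e n i); have l2 := ltn_ord (e n' i).
      lia.
    by move: h2; rewrite a0 mulr0 => /eqP; rewrite subr_eq0 => /eqP [].
  by apply: (cast_ord_inj (eq_n := esym cT)); apply: enum_val_inj.
move=> c.
have pf : forall i : 'I_k, (absz (modz (c i ord0) (d`_i)%R) < absz (d`_i)%R)%N.
  move=> i; have h1 := modz_ge0 (c i 0) (hd i); have h2 := ltz_mod (c i 0) (hd i).
  lia.
pose ef : T := [ffun i => Ordinal (pf i)].
exists (cast_ord cT (enum_rank ef)); exists (\col_i (divz (c i 0) d`_i)).
have -> : e (cast_ord cT (enum_rank ef)) = ef by rewrite /e cast_ordK enum_rankK.
apply/matrixP => i j; rewrite (ord1 j) dmx_mul !mxE ffunE /=.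
have h1 := modz_ge0 (c i 0) (hd i); have h3 := divz_eq (c i 0) (d`_i).
lia.
Qed.

Lemma coker_unimod k (D L R : 'M[int]_k) N : coker_order D N ->
  L \in unitmx -> R \in unitmx -> coker_order (L *m D *m R) N.
Proof.
move=> [r [h1 h2]] uL uR; exists (fun i => L *m r i); split.
  move=> i j a h; apply: (h1 i j (R *m a)).
  by rewrite -(mulKmx uL (r i - r j)) mulmxBr h -!mulmxA mulKmx.
move=> c; have [i [a ha]] := h2 (invmx L *m c).
exists i, (invmx R *m a).
by rewrite !mulmxA mulmxK // -mulmxA -ha mulmxBr mulKVmx.
Qed.

Lemma coker_det k (M : 'M[int]_k) : (forall a : 'cV[int]_k, M *m a = 0 -> a = 0) ->
  coker_order M `|\det M|%N.
Proof.
move=> inj.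
have [L uL [R uR [d _ eM0]]] := int_Smith_normal_form M.
have eM : M = L *m dmx k d *m R by [].
have hd : forall i : 'I_k, d`_i != 0.
  move=> i; apply/negP => /eqP di.
  pose ei : 'cV[int]_k := \col_j ((j == i)%:R).
  have : invmx R *m ei = 0.
    apply: inj; rewrite eM -!mulmxA mulKVmx //.
    have -> : dmx k d *m ei = 0.
      apply/matrixP => j l; rewrite (ord1 l) dmx_mul !mxE.
      by case: (eqVneq j i) => [->|hji]; [rewrite di mul0r | rewrite mulr0].
    by rewrite mulmx0.
  move/(congr1 (mulmx R)); rewrite mulKVmx // mulmx0 => /matrixP/(_ i 0).
  by rewrite !mxE eqxx => /eqP; rewrite oner_eq0.
have -> : `|\det M|%N = (\prod_(i < k) absz (d`_i)%R)%N.
  rewrite eM !det_mulmx !abszM.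
  rewrite unit_int_abs -?unitmxE // [X in (_ * X)%N]unit_int_abs -?unitmxE // mul1n muln1.
  have -> : dmx k d = diag_mx (\row_i d`_i).
    by apply/matrixP => i j; rewrite !mxE.
  rewrite det_diag (big_morph absz abszM (erefl (absz 1))).
  by apply: eq_bigr => i _; rewrite mxE.
rewrite eM; apply: coker_unimod => //; exact: coker_diag.
Qed.
Section Grid.
Variable G : {fset (int * int)}.

Definition ext (f : {ffun G -> int}) (q : int * int) : int :=
  if (insub q : option G) is Some w then f w else 0.

Lemma ext_sum f q : ext f q = \sum_(w : G | val w == q) f w.
Proof.
rewrite /ext; case: insubP => [w _ <-|hq].
  by rewrite (big_pred1 w) // => x /=; rewrite val_eqE.
by rewrite big_pred0 // => x; apply/negP => /eqP ex; move: hq; rewrite -ex fsvalP.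
Qed.

Lemma ext_val f (w : G) : ext f (val w) = f w.
Proof. by rewrite /ext valK. Qed.

Lemma ext_out f q : q \notin G -> ext f q = 0.
Proof. by rewrite /ext; case: insubP => // w _ <-; rewrite fsvalP. Qed.

Lemma uniq_nb p : uniq (neighbors p).
Proof.
case: p => x y; rewrite /neighbors /= !inE !xpair_eqE.
lia.
Qed.

Lemma lapE f (u : G) : lap f u =
  ext f ((val u).1 + 1, (val u).2) + ext f ((val u).1 - 1, (val u).2) +
  ext f ((val u).1, (val u).2 + 1) + ext f ((val u).1, (val u).2 - 1) - 4 * f u.
Proof.
rewrite /lap; congr (_ - _).
have -> : ext f ((val u).1 + 1, (val u).2) + ext f ((val u).1 - 1, (val u).2) +
  ext f ((val u).1, (val u).2 + 1) + ext f ((val u).1, (val u).2 - 1) =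
  \sum_(q <- neighbors (val u)) ext f q.
  by rewrite /neighbors !big_cons big_nil !addrA addr0.
under [RHS]eq_bigr do rewrite ext_sum big_mkcond.
rewrite exchange_big /= big_mkcond /=; apply: eq_bigr => w _.
rewrite -big_mkcond big_const_seq.
have -> : count (fun q => val w == q) (neighbors (val u)) = (val w \in neighbors (val u)) :> nat.
  rewrite -count_uniq_mem ?uniq_nb //; apply: eq_count => q /=; by rewrite eq_sym.
by rewrite /adjZ2; case: (val w \in _) => /=; rewrite ?addr0.
Qed.

Lemma ext_le (f : {ffun G -> int}) (m : int) q : (forall v, f v <= m) -> 0 <= m -> ext f q <= m.
Proof. by move=> hf hm; rewrite /ext; case: insub. Qed.

Lemma lap0_le0 (h : {ffun G -> int}) : (forall v, lap h v = 0) -> forall v, h v <= 0.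
Proof.
move=> h0 v0; rewrite leNgt; apply/negP => pos.
case: (@Order.TotalTheory.arg_maxP _ _ G v0 xpredT h isT) => vm _ hvm.
have hle : forall v, h v <= h vm by move=> v; exact: hvm.
have mpos : 0 < h vm by apply: lt_le_trans pos (hle v0).
case: (@Order.TotalTheory.arg_maxP _ _ G vm (fun i => h i == h vm) (fun i => (val i).1) (eqxx _)) => w /eqP hw hwx.
have := h0 w; rewrite lapE hw.
have e1 : ext h ((val w).1 + 1, (val w).2) < h vm.
  rewrite /ext; case: insubP => [x _ ex|//].
  rewrite lt_neqAle hle andbT; apply/negP => /eqP hx.
  have := hwx x (introT eqP hx); rewrite ex /= => H.
  have H' : ((fsval w).1 + 1 <= (fsval w).1)%R := H. lia.
have e2 := ext_le ((val w).1 - 1, (val w).2) hle (ltW mpos).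
have e3 := ext_le ((val w).1, (val w).2 + 1) hle (ltW mpos).
have e4 := ext_le ((val w).1, (val w).2 - 1) hle (ltW mpos).
move=> /eqP; rewrite subr_eq0 => /eqP E.
have := ltr_leD (ltr_leD (ltr_leD e1 e2) e3) e4.
rewrite E; move: (h vm) => z; lia.
Qed.

Lemma lapD (h1 h2 : {ffun G -> int}) u :
  lap [ffun x => h1 x + h2 x] u = lap h1 u + lap h2 u.
Proof.
rewrite /lap; under eq_bigr do rewrite ffunE.
rewrite big_split ffunE /= mulrDr; move: (\sum_(i | _) _) (\sum_(i | _) _) => a b.
move: (h1 u) (h2 u) => x y; lia.
Qed.

Lemma lapN (h : {ffun G -> int}) u : lap [ffun x => - h x] u = - lap h u.
Proof.
rewrite /lap; under eq_bigr do rewrite ffunE.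
rewrite sumrN ffunE /=; move: (\sum_(i | _) _) => a; move: (h u) => x; lia.
Qed.

Lemma lap_lin n (a : 'I_n -> int) (B : 'I_n -> {ffun G -> int}) (h : {ffun G -> int}) u :
  (forall v, h v = \sum_j a j * B j v) -> lap h u = \sum_j a j * lap (B j) u.
Proof.
move=> hd; rewrite /lap; under eq_bigr do rewrite hd.
rewrite hd exchange_big /= mulr_sumr -sumrB; apply: eq_bigr => j _.
by rewrite mulrBr mulr_sumr mulrCA.
Qed.

Lemma lap_inj (h : {ffun G -> int}) : (forall v, lap h v = 0) -> forall v, h v = 0.
Proof.
move=> h0 v; apply/eqP; rewrite eq_le lap0_le0 //=.
have := @lap0_le0 [ffun x => - h x] _ v.
rewrite ffunE oppr_le0; apply => u; by rewrite lapN h0 oppr0.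
Qed.

Lemma int_nb (v : G) q : ~~ on_boundary G (val v) -> q \in neighbors (val v) -> q \in G.
Proof.
rewrite /on_boundary fsvalP andTb => hn hq; apply/negPn; apply: contra hn => hq'.
by apply/hasP; exists q.
Qed.

Definition Pt (t : int) := forall f : {ffun G -> int}, exists h : {ffun G -> int},
  forall v : G, ~~ on_boundary G (val v) -> t <= (val v).2 -> f v = lap h v.

Lemma ext_ffun (F : int * int -> int) q : q \in G -> ext [ffun x : G => F (val x)] q = F q.
Proof. by move=> hq; rewrite /ext insubT ffunE. Qed.

Lemma step t : Pt (t + 1) -> Pt t.
Proof.
move=> IH f; have [h hh] := IH f.
pose g v := f v - lap h v.
pose F (p : int * int) := \sum_(v : G | ~~ on_boundary G (val v) && ((val v).2 == t)
   && (val v == (p.1, p.2 + 1))) g v.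
pose h2 := [ffun x : G => F (val x)].
exists [ffun x => h x + h2 x] => u iu ht.
rewrite lapD.
have F0 : forall p, t <= p.2 -> F p = 0.
  move=> p hp; apply: big_pred0 => v; apply/negP => /andP [/andP [_ /eqP e1] /eqP e2].
  rewrite e2 /= in e1; move: hp; rewrite -e1; move: (p.2) => z; lia.
have Fm : F ((val u).1, (val u).2 - 1) = if (val u).2 == t then g u else 0.
  rewrite /F /= subrK -surjective_pairing.
  case: ifP => hut.
    rewrite (big_pred1 u) // => v /=; rewrite val_eqE.
    by case: (eqVneq v u) => [->|]; rewrite ?iu ?hut ?andbF.
  apply: big_pred0 => v; apply/negP => /andP [/andP [_ /eqP e1] /eqP e2].
  by move: hut; rewrite -e2 e1 eqxx.
have nb : forall q, q \in neighbors (val u) -> ext h2 q = F q.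
  by move=> q hq; rewrite ext_ffun // (int_nb iu hq).
have lh2 : lap h2 u = if (val u).2 == t then g u else 0.
  have hz1 : t <= (val u).2 + 1 by move: ht; move: ((val u).2) => z; lia.
  rewrite lapE !nb ?inE ?eqxx ?orbT //.
  rewrite (F0 ((val u).1 + 1, (val u).2)) // (F0 ((val u).1 - 1, (val u).2)) //.
  rewrite (F0 ((val u).1, (val u).2 + 1)) // Fm ffunE (F0 (val u)) //.
  by rewrite !add0r mulr0 subr0.
rewrite lh2; case: ifP => hut.
  by rewrite /g addrC subrK.
rewrite addr0; apply: hh => //.
move/negbT: hut => hut; lia.
Qed.

Lemma reduce (f : {ffun G -> int}) : exists h : {ffun G -> int},
  forall v : G, ~~ on_boundary G (val v) -> f v = lap h v.
Proof.
pose Y := (\sum_(v : G) absz (val v).2)%N.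
have hY : forall v : G, (absz (val v).2 <= Y)%N.
  by move=> v; rewrite /Y (bigD1 v) //= leq_addr.
have base : Pt (Y%:Z + 1).
  move=> f0; exists f0 => v _ hv; have := hY v; move: hv; move: ((val v).2) => z.
  lia.
have gen : forall n : nat, Pt (Y%:Z + 1 - n%:Z).
  elim=> [|n IHn]; first by rewrite subr0.
  apply: step; have -> : Y%:Z + 1 - n.+1%:Z + 1 = Y%:Z + 1 - n%:Z by lia.
  exact: IHn.
have [h hh] := gen (Y.*2.+1) f.
exists h => v iv; apply: hh => //.
have := hY v; move: ((val v).2) => z; lia.
Qed.

End Grid.

Unset Implicit Arguments.

Theorem lemma2 (G : {fset (int * int)}) (hG : convex_domain G)
    (k : nat) (bd : 'I_k -> G) (bd_inj : injective bd)
    (bd_onto : forall v : G, on_boundary G (val v) <-> exists i, bd i = v)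
    (B : 'I_k -> {ffun G -> int}) (hB : harmonic_basis B) :
  sandpile_order G `|\det (\matrix_(i < k, j < k) lap (B j) (bd i))|%N.
Proof.
case: hB => hharm hind hspan.
set M := \matrix_(i < k, j < k) lap (B j) (bd i).
pose phi (c : 'cV[int]_k) : {ffun G -> int} :=
  [ffun v => \sum_i (if bd i == v then c i 0 else 0)].
have phi_bd : forall c i, phi c (bd i) = c i 0.
  move=> c i; rewrite ffunE (bigD1 i) //= eqxx big1 ?addr0 // => j hj.
  by rewrite (inj_eq bd_inj) (negbTE hj).
have phi_int : forall c v, ~~ on_boundary G (val v) -> phi c v = 0.
  move=> c v hv; rewrite ffunE big1 // => i _; case: eqP => // ev.
  by move: hv; rewrite (bd_onto v).2 //; exists i.
pose hof (a : 'cV[int]_k) : {ffun G -> int} := [ffun v => \sum_j a j 0 * B j v].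
have lap_hof : forall a u, lap (hof a) u = \sum_j a j 0 * lap (B j) u.
  by move=> a u; apply: lap_lin => v; rewrite ffunE.
have hof_int : forall a u, ~~ on_boundary G (val u) -> lap (hof a) u = 0.
  by move=> a u hu; rewrite lap_hof big1 // => j _; rewrite hharm // mulr0.
have hof_bd : forall a i, lap (hof a) (bd i) = (M *m a) i 0.
  move=> a i; rewrite lap_hof !mxE; apply: eq_bigr => j _; by rewrite mxE mulrC.
have K2 : forall c c', sandpile_congr (phi c) (phi c') <-> exists a, c - c' = M *m a.
  move=> c c'; split.
    case=> h hh.
    have harm : harmonic h.
      by move=> v hv; rewrite -hh !phi_int // subr0.
    have [cc hcc] := hspan h harm.
    exists (\col_j cc j); apply/matrixP => i j; rewrite (ord1 j) !mxE -!phi_bd hh.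
    rewrite (lap_lin (a := cc) (B := B)) //; apply: eq_bigr => l _.
    by rewrite !mxE mulrC.
  case=> a ha; exists (hof a) => v.
  case: (boolP (on_boundary G (val v))) => hv.
    have [i <-] := (bd_onto v).1 hv.
    by rewrite !phi_bd hof_bd -ha !mxE.
  by rewrite !phi_int // hof_int // subr0.
have K3 : forall a : 'cV[int]_k, M *m a = 0 -> a = 0.
  move=> a ha.
  have h0 : forall v, hof a v = 0.
    apply: lap_inj => v.
    case: (boolP (on_boundary G (val v))) => hv.
      have [i <-] := (bd_onto v).1 hv.
      by rewrite hof_bd ha mxE.
    exact: hof_int.
  have := hind (fun j => a j 0) (fun v => etrans (esym (ffunE _ v)) (h0 v)).
  by move=> hz; apply/matrixP => i j; rewrite (ord1 j) hz mxE.
have K4 : forall f, exists c, sandpile_congr f (phi c).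
  move=> f; have [h hh] := reduce f.
  exists (\col_i (f (bd i) - lap h (bd i))); exists h => v.
  case: (boolP (on_boundary G (val v))) => hv.
    have [i <-] := (bd_onto v).1 hv.
    by rewrite phi_bd mxE opprB addrC subrK.
  by rewrite phi_int // subr0 hh.
have trans : forall f g g' : {ffun G -> int}, sandpile_congr f g -> sandpile_congr g g' -> sandpile_congr f g'.
  move=> f g g' [h1 e1] [h2 e2]; exists [ffun x => h1 x + h2 x] => v.
  by rewrite lapD -e1 -e2 addrA subrK.
have [r [rd rc]] := coker_det K3.
exists (fun i => phi (r i)); split.
  by move=> i j /K2 [a ha]; exact: rd ha.
move=> f; have [c hc] := K4 f; have [i [a ha]] := rc c.
exists i; apply: trans hc _; apply/K2; by exists a.
Qed.
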